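(* Let $P=(P_1,\ldots,P_n)$ be a profile of linear orders on a finite set $A$ with voter set $N=\{1,\ldots,n\}$, and let $i\in N$ be a potential leaf of $P$. Let $P_{-i}$ denote the profile obtained from $P$ by removing voter $i$. Then $P$ is single-crossing with respect to some tree on $N$ if and only if $P_{-i}$ is single-crossing with respect to some tree on $N\setminus\{i\}$.
   Context: Voter $j$ prefers $a$ to $b$ is written $a\succ_j b$. Given a tree $T=(V,E)$ on a voter set $V$, a profile is single-crossing with respect to $T$ if for every pair of distinct alternatives $a,b$ one of the following holds: (i) there is an edge $e\in E$ such that, removing $e$ from $T$, the two resulting subtrees have vertex sets $V_1,V_2$ with all voters in $V_1$ preferring $a$ to $b$ and all voters in $V_2$ preferring $b$ to $a$; or (ii) all voters prefer $a$ to $b$, or all voters prefer $b$ to $a$. A voter $i\in N$ is a potential leaf of $P$ if (a) the set $S_i=\{(a,b)\in A^2: a\succ_i b \text{ and } b\succ_j a \text{ for all } j\ne i\}$ is nonempty, and (b) there exists $k\in N$, $k\ne i$, such that $a\succ_i b\Leftrightarrow a\succ_k b$ for all $a,b\in A$ such that neither $(a,b)$ nor $(b,a)$ belongs to $S_i$. *)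

(* Defs.v *)
From mathcomp Require Import all_boot.
Set Implicit Arguments. Unset Strict Implicit. Unset Printing Implicit Defensive.

(* A (strict) linear order on A, given as a boolean relation: r a b means a ≻ b. *)
Definition linear_order (A : finType) (r : rel A) : Prop :=
  [/\ irreflexive r, transitive r & forall a b, a != b -> r a b || r b a].

Section Trees.
Variable V : finType.

Definition adj (E : {set {set V}}) : rel V := fun u v => (u != v) && ([set u; v] \in E).

Definition comp (E : {set {set V}}) (x : V) : {set V} := [set y | connect (adj E) x y].

Definition is_tree (S : {set V}) (E : {set {set V}}) : Prop :=
  [/\ S != set0,
      forall e, e \in E -> exists x y, [/\ x \in S, y \in S, x != y & e = [set x; y]],
      forall x y, x \in S -> y \in S -> connect (adj E) x y
    & #|E| = #|S| - 1].

End Trees.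

Section SingleCrossing.
Variables (V A : finType).

(* Removing an edge e = {x,y} splits
   the tree into the two subtrees with vertex sets comp (E :\ e) x and comp (E :\ e) y. *)
Definition single_crossing_wrt (P : V -> rel A) (S : {set V}) (E : {set {set V}}) : Prop :=
  forall a b : A, a != b ->
    (exists e, exists x y,
        [/\ e \in E, x != y, e = [set x; y],
            (forall j, j \in comp (E :\ e) x -> P j a b)
          & (forall j, j \in comp (E :\ e) y -> P j b a)])
    \/ (forall j, j \in S -> P j a b)
    \/ (forall j, j \in S -> P j b a).

Definition single_crossing_on (P : V -> rel A) (S : {set V}) : Prop :=
  exists E : {set {set V}}, is_tree S E /\ single_crossing_wrt P S E.

Definition S_set (P : V -> rel A) (i : V) : rel A :=
  fun a b => P i a b && [forall j, (j != i) ==> P j b a].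

Definition potential_leaf (P : V -> rel A) (i : V) : Prop :=
  (exists a b, S_set P i a b) /\
  (exists k, k != i /\
     forall a b, ~~ S_set P i a b -> ~~ S_set P i b a -> (P i a b = P k a b)).

End SingleCrossing.

(* Main.v *)
Require Import Defs.
From mathcomp Require Import all_boot.
From mathcomp Require Import zify.
Set Implicit Arguments. Unset Strict Implicit.

Section Aux.
Variable V : finType.

Lemma adj_sym (E : {set {set V}}) : symmetric (adj E).
Proof. by move=> u v; rewrite /adj eq_sym setUC. Qed.

Lemma connect_proj (e e' : rel V) (f : V -> V) :
  (forall p q, e p q -> f p = f q \/ e' (f p) (f q)) ->
  forall u v, connect e u v -> connect e' (f u) (f v).
Proof.
move=> H u v /connectP [p pth ->].
elim: p u pth => [|w p IH] u /=; first by rewrite connect0.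
case/andP => euw pth; apply: connect_trans (IH _ pth).
by case: (H _ _ euw) => [->|h]; [exact: connect0 | exact: connect1].
Qed.

Lemma connect_subrel (e e' : rel V) : subrel e e' ->
  forall u v, connect e u v -> connect e' u v.
Proof. by move=> H u v; apply: (@connect_proj e e' id) => p q /H; right. Qed.

Lemma connect_isolated (e : rel V) x y : (forall q, ~~ e x q) -> connect e x y -> y = x.
Proof.
move=> H /connectP [[|w p] /= pth ->] //.
by move: pth; rewrite (negbTE (H w)).
Qed.

Lemma mem2 (x y z : V) : z \in [set x; y] -> z = x \/ z = y.
Proof. by rewrite !inE => /orP [] /eqP; auto. Qed.

Lemma iso (F : {set {set V}}) i : (forall e, e \in F -> i \notin e) ->
  forall q, ~~ adj F i q.
Proof. by move=> av q; apply/negP => /andP [_ /av]; rewrite !inE eqxx. Qed.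

Lemma noreach (F : {set {set V}}) i u : (forall e, e \in F -> i \notin e) ->
  connect (adj F) u i -> u = i.
Proof.
move=> av h; apply: (@connect_isolated (adj F) i u (iso av)).
by rewrite (sym_connect_sym (@adj_sym F)).
Qed.

Lemma attach (F : {set {set V}}) i k : k != i -> (forall e, e \in F -> i \notin e) ->
  forall u v, connect (adj ([set i; k] |: F)) u v ->
  connect (adj F) (if u == i then k else u) (if v == i then k else v).
Proof.
move=> ki av; apply: connect_proj => p q /andP [pq]; rewrite in_setU1.
case/orP => [/eqP h | h].
  left. have hp : p \in [set i; k] by rewrite -h !inE eqxx.
  have hq : q \in [set i; k] by rewrite -h !inE eqxx orbT.
  by case/mem2: hp => ->; case/mem2: hq => ->; rewrite ?eqxx ?if_same.
right. have := av _ h; rewrite !inE negb_or => /andP [ip iq].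
by rewrite eq_sym (negbTE ip) eq_sym (negbTE iq) /adj pq h.
Qed.

End Aux.

Theorem lemma2 (V A : finType) (P : V -> rel A)
  (HP : forall j, linear_order (P j)) (i : V) (Hi : potential_leaf P i) :
  single_crossing_on P [set: V] <-> single_crossing_on P ([set: V] :\ i).
Proof.
have [[a [b Sab]] [k [kni Hk]]] := Hi.
have asym : forall j c d, P j c d -> P j d c -> False.
  move=> j c d h1 h2; have [irr tr _] := HP j.
  by move: (tr d c c h1 h2); rewrite irr.
have kS : k \in [set: V] :\ i by rewrite in_setD1 kni in_setT.
split.
- move=> [E [[_ HE Hconn Hcard] Hsc]].
  move: (Sab) => /andP [Piab /forallP Hall].
  have only_i : forall j, P j a b -> j = i.
    move=> j Pj; apply/eqP; apply: contraT => ji.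
    by case: (asym j a b Pj (implyP (Hall j) ji)).
  have ab : a != b.
    by apply: contraTneq Piab => ->; have [irr _ _] := HP i; rewrite irr.
  case: (Hsc a b ab) => [[e [x [y [eE xy ey Hx Hy]]]] | [H2|H2]]; last first.
  + by case: (asym i a b Piab (H2 i (in_setT i))).
  + by move: kni; rewrite (only_i k (H2 k (in_setT k))) eqxx.
  have xi : x = i by apply: only_i; apply: Hx; rewrite inE connect0.
  subst x.
  have Hiso : forall q, ~~ adj (E :\ e) i q.
    move=> q; apply/negP => aq.
    have : q \in Defs.comp (E :\ e) i by rewrite inE connect1.
    move/Hx/only_i => qi; move: aq; by rewrite /adj qi eqxx.
  have yi : (y == i) = false by rewrite eq_sym; apply/negbTE.
  have Hproj : forall u v, connect (adj E) u v ->
      connect (adj (E :\ e)) (if u == i then y else u) (if v == i then y else v).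
    apply: connect_proj => p q /andP [pq pqE].
    case: (eqVneq [set p; q] e) => [pqe | pqe].
      left. have hp : p \in e by rewrite -pqe !inE eqxx.
      have hq : q \in e by rewrite -pqe !inE eqxx orbT.
      rewrite ey in hp hq.
      by case/mem2: hp => ->; case/mem2: hq => ->; rewrite ?eqxx ?yi.
    right. have aF : adj (E :\ e) p q by rewrite /adj pq in_setD1 pqe pqE.
    have pi : p != i by apply: contraTneq aF => ->; exact: Hiso.
    have qi : q != i by apply: contraTneq aF => ->; rewrite adj_sym; exact: Hiso.
    by rewrite (negbTE pi) (negbTE qi).
  have HconnF : forall u v, u != i -> v != i -> connect (adj (E :\ e)) u v.
    move=> u v ui vi; have := Hproj u v (Hconn u v (in_setT u) (in_setT v)).
    by rewrite (negbTE ui) (negbTE vi).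
  exists (E :\ e); split.
  + split.
    * by apply/set0Pn; exists k.
    * move=> e'; rewrite in_setD1 => /andP [e'e e'E].
      have [x' [y' [_ _ xy' e'xy]]] := HE e' e'E; subst e'.
      have ax : adj (E :\ e) x' y' by rewrite /adj xy' in_setD1 e'e e'E.
      have x'i : x' != i by apply: contraTneq ax => ->; exact: Hiso.
      have y'i : y' != i by apply: contraTneq ax => ->; rewrite adj_sym; exact: Hiso.
      by exists x', y'; rewrite !in_setD1 x'i y'i !in_setT.
    * by move=> u v; rewrite !in_setD1 => /andP [ui _] /andP [vi _]; exact: HconnF.
    * have h1 := cardsD1 e E; rewrite eE in h1.
      have h2 := cardsD1 i [set: V]; rewrite in_setT in h2.
      rewrite h1 h2 /= in Hcard. by rewrite addKn in Hcard; rewrite -Hcard addKn.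
  + move=> a' b' ab'.
    case: (Hsc a' b' ab') => [[e2 [x2 [y2 [e2E xy2 e2xy Hx2 Hy2]]]] | [H2|H2]].
    * case: (eqVneq e2 e) => [e2e | e2e].
        rewrite e2e in Hx2 Hy2. case: (eqVneq x2 i) => [x2i | x2i].
          right; right => j; rewrite in_setD1 => /andP [ji _].
          apply: Hy2; rewrite inE; apply: HconnF => //.
          by rewrite -x2i eq_sym.
        right; left => j; rewrite in_setD1 => /andP [ji _].
        by apply: Hx2; rewrite inE; apply: HconnF.
      left; exists e2, x2, y2; split => //; first by rewrite in_setD1 e2e e2E.
        move=> j; rewrite inE => cj; apply: Hx2; rewrite inE.
        apply: connect_subrel cj => p q /andP [pq]; rewrite /adj pq !in_setD1.
        by case/and3P => -> _ ->.
      move=> j; rewrite inE => cj; apply: Hy2; rewrite inE.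
      apply: connect_subrel cj => p q /andP [pq]; rewrite /adj pq !in_setD1.
      by case/and3P => -> _ ->.
    * by right; left => j; rewrite in_setD1 => /andP [_ jV]; exact: H2.
    * by right; right => j; rewrite in_setD1 => /andP [_ jV]; exact: H2.
- move=> [E' [[_ HE' Hconn' Hcard'] Hsc']].
  have avoid : forall e, e \in E' -> i \notin e.
    move=> e /HE' [x [y [xS yS _ ->]]]; move: xS yS.
    rewrite !in_setD1 !inE => /andP [xi _] /andP [yi _].
    by rewrite negb_or eq_sym xi eq_sym yi.
  have e0E' : [set i; k] \notin E'.
    by apply/negP => /avoid; rewrite !inE eqxx.
  have EE : ([set i; k] |: E') :\ [set i; k] = E' by exact: setU1K.
  have lift : forall u v, connect (adj E') u v -> connect (adj ([set i; k] |: E')) u v.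
    apply: connect_subrel => p q /andP [pq h]; by rewrite /adj pq in_setU1 h orbT.
  have eik : adj ([set i; k] |: E') i k by rewrite /adj eq_sym kni in_setU1 eqxx.
  have notik : forall j, connect (adj E') k j -> j != i.
    move=> j cj; apply: contraTneq cj => ->; apply/negP => /(noreach avoid) /eqP.
    by rewrite (negbTE kni).
  exists ([set i; k] |: E'); split.
  + split.
    * by apply/set0Pn; exists i; rewrite in_setT.
    * move=> e; rewrite in_setU1 => /orP [/eqP -> | /HE' [x [y [_ _ xy ->]]]].
        by exists i, k; rewrite !in_setT eq_sym kni.
      by exists x, y; rewrite !in_setT.
    * move=> u v _ _; case: (eqVneq u i) => [->|ui]; case: (eqVneq v i) => [->|vi].
      - exact: connect0.
      - apply: connect_trans (connect1 eik) (lift _ _ (Hconn' k v kS _)).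
        by rewrite in_setD1 vi in_setT.
      - apply: connect_trans (lift _ _ (Hconn' u k _ kS)) (connect1 _).
          by rewrite in_setD1 ui in_setT.
        by rewrite adj_sym.
      - by apply: lift; apply: Hconn'; rewrite in_setD1 ?ui ?vi in_setT.
    * rewrite cardsU1 e0E' /=.
      have h2 := cardsD1 i [set: V]; rewrite in_setT in h2.
      have Y0 : 0 < #|[set: V] :\ i| by apply/card_gt0P; exists k.
      by rewrite Hcard' h2 addKn subn1 add1n prednK.
  + move=> a' b' ab'.
    case: (boolP (S_set P i a' b')) => [S1|nS1].
      left; exists [set i; k], i, k; split.
      - by rewrite in_setU1 eqxx.
      - by rewrite eq_sym kni.
      - done.
      - move=> j; rewrite EE inE => /(connect_isolated (iso avoid)) ->.
        by case/andP: S1.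
      - move=> j; rewrite EE inE => cj; case/andP: S1 => _ /forallP H.
        by apply: (implyP (H j)); apply: notik.
    case: (boolP (S_set P i b' a')) => [S2|nS2].
      left; exists [set i; k], k, i; split.
      - by rewrite in_setU1 eqxx.
      - done.
      - by rewrite setUC.
      - move=> j; rewrite EE inE => cj; case/andP: S2 => _ /forallP H.
        by apply: (implyP (H j)); apply: notik.
      - move=> j; rewrite EE inE => /(connect_isolated (iso avoid)) ->.
        by case/andP: S2.
    have Hab := Hk a' b' nS1 nS2; have Hba := Hk b' a' nS2 nS1.
    case: (Hsc' a' b' ab') => [[e2 [x2 [y2 [e2E xy2 e2xy Hx2 Hy2]]]] | [H2|H2]].
    * have av2 : forall e, e \in E' :\ e2 -> i \notin e.
        by move=> e; rewrite in_setD1 => /andP [_ /avoid].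
      have sub : forall u v, connect (adj (([set i; k] |: E') :\ e2)) u v ->
                    connect (adj ([set i; k] |: (E' :\ e2))) u v.
        apply: connect_subrel => p q /andP [pq]; rewrite /adj pq !(in_setU1, in_setD1) /=.
        by case/andP => ne /orP [->|->]; rewrite ?ne ?orbT.
      have x2i : x2 != i.
        by apply: contraTneq (avoid _ e2E) => <-; rewrite e2xy !inE eqxx.
      have y2i : y2 != i.
        by apply: contraTneq (avoid _ e2E) => <-; rewrite e2xy !inE eqxx orbT.
      left; exists e2, x2, y2; split => //; first by rewrite in_setU1 e2E orbT.
        move=> j; rewrite inE => /sub /(attach kni av2); rewrite (negbTE x2i).
        case: (eqVneq j i) => [->|ji] cj.
          by rewrite Hab; apply: Hx2; rewrite inE.
        by apply: Hx2; rewrite inE.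
      move=> j; rewrite inE => /sub /(attach kni av2); rewrite (negbTE y2i).
      case: (eqVneq j i) => [->|ji] cj.
        by rewrite Hba; apply: Hy2; rewrite inE.
      by apply: Hy2; rewrite inE.
    * right; left => j _; case: (eqVneq j i) => [->|ji].
        by rewrite Hab; apply: H2.
      by apply: H2; rewrite in_setD1 ji in_setT.
    * right; right => j _; case: (eqVneq j i) => [->|ji].
        by rewrite Hba; apply: H2.
      by apply: H2; rewrite in_setD1 ji in_setT.
Qed.
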